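(* If $G$ and $H$ are two connected graphs with $\mathrm{toi}(G)=\mathrm{toi}(H)=3$, then $\mathrm{toi}(G \square H) \geq 4$. Furthermore, equality holds when $G=H=K_3$.
   Context: $\mathrm{toi}(G)$ is the maximum $t$ such that $G$ contains a totally odd strong immersion of $K_t$ (an injective map of $V(K_t)$ into $V(G)$ with pairwise edge-disjoint odd paths joining each pair of terminals, no terminal being an interior vertex of any path). $G\square H$ is the Cartesian product: vertex set $V(G)\times V(H)$, with $(g_1,h_1)\sim(g_2,h_2)$ iff ($g_1=g_2$ and $h_1h_2\in E(H)$) or ($h_1=h_2$ and $g_1g_2\in E(G)$). *)

(* Defs.v *)
From mathcomp Require Import all_boot.
From mathcomp Require Import boolp.

Set Implicit Arguments.
Unset Strict Implicit.
Unset Printing Implicit Defensive.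

Definition simple_graph (V : finType) (e : rel V) : Prop :=
  symmetric e /\ irreflexive e.

Definition connected_graph (V : finType) (e : rel V) : Prop :=
  forall x y : V, connect e x y.

(* A path from a to b: the vertex sequence a :: p, consecutive vertices
   adjacent, all vertices distinct, ending at b.  Its length (number of
   edges) is size p. *)
Definition is_path (V : finType) (e : rel V) (a b : V) (p : seq V) : bool :=
  [&& path e a p, uniq (a :: p) & last a p == b].

Definition odd_path (V : finType) (e : rel V) (a b : V) (p : seq V) : bool :=
  is_path e a b p && odd (size p).

Definition interior (V : finType) (a : V) (p : seq V) : seq V :=
  behead (belast a p).

Definition path_edges (V : finType) (a : V) (p : seq V) : seq (V * V) :=
  zip (a :: p) p.

Definition same_edge (V : finType) (u v : V * V) : bool :=
  ((u.1 == v.1) && (u.2 == v.2)) || ((u.1 == v.2) && (u.2 == v.1)).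

Definition edge_disjoint (V : finType) (a : V) (p : seq V) (a' : V) (p' : seq V)
  : bool :=
  all (fun u => all (fun v => ~~ same_edge u v) (path_edges a' p'))
      (path_edges a p).

Definition toi_immersion (V : finType) (e : rel V) (t : nat) : Prop :=
  exists (f : 'I_t -> V) (P : 'I_t -> 'I_t -> seq V),
    [/\ injective f,
        (forall i j : 'I_t, i < j -> odd_path e (f i) (f j) (P i j)),
        (forall i j i' j' : 'I_t, i < j -> i' < j' -> (i, j) != (i', j') ->
            edge_disjoint (f i) (P i j) (f i') (P i' j')) &
        (forall i j k : 'I_t, i < j -> f k \notin interior (f i) (P i j))].

(* toi(G): the maximum t such that G contains a totally odd strong immersion
   of K_t (t <= #|V| by injectivity, and t = 0 always works). *)
Definition toi (V : finType) (e : rel V) : nat :=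
  \max_(t < #|V|.+1 | `[< toi_immersion e t >]) t.

Definition cart_rel (V W : finType) (e : rel V) (f : rel W) : rel (V * W) :=
  fun x y => ((x.1 == y.1) && f x.2 y.2) || ((x.2 == y.2) && e x.1 y.1).

Definition complete_rel (n : nat) : rel 'I_n := fun x y => x != y.
Arguments complete_rel n : clear implicits.

(* Main.v *)
Require Import Defs.
From mathcomp Require Import all_boot.
From mathcomp Require Import boolp.
Set Implicit Arguments. Unset Strict Implicit. Unset Printing Implicit Defensive.

Section Gen.
Variable V : finType.
Implicit Types (a b x : V) (p m s : seq V).

Lemma interior_rcons a m b : interior a (rcons m b) = m.
Proof. by rewrite /interior belast_rcons. Qed.

Lemma rcons_form a p : p != [::] -> p = rcons (interior a p) (last a p).
Proof. by case: p => // y q _; rewrite /interior /= -lastI. Qed.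

Lemma path_edges_cat a s t :
  path_edges a (s ++ t) = path_edges a s ++ path_edges (last a s) t.
Proof. by elim: s a => [|y s IH] a //=; rewrite /path_edges /= -IH. Qed.

Lemma memE a p u v :
  (u, v) \in path_edges a p <-> exists s1 s2, a :: p = s1 ++ [:: u, v & s2].
Proof.
split.
  elim: p a => [|y p IH] a //=; rewrite /path_edges /= inE => /orP [/eqP [-> ->]|].
    by exists [::], p.
  move/IH => [s1 [s2 E]]; exists (a :: s1), s2; by rewrite E.
move=> [s1 [s2]]; elim: s1 a p => [|w s1 IH] a p /=.
  by case=> -> ->; rewrite /path_edges /= inE eqxx.
case=> -> ; case: p => [|y p]; first by case: s1 {IH}.
move=> /= E; rewrite /path_edges /= inE; apply/orP; right; exact: IH.
Qed.

Variable e : rel V.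
Hypothesis esym : symmetric e.

Lemma rev_odd a b m :
  odd_path e a b (rcons m b) ->
  odd_path e b a (rcons (rev m) a) /\
  (forall u w, (u, w) \in path_edges b (rcons (rev m) a) -> (w, u) \in path_edges a (rcons m b)).
Proof.
have RE : b :: rcons (rev m) a = rev (a :: rcons m b).
  by rewrite rev_cons rev_rcons.
rewrite /odd_path /is_path => /andP [/and3P [Hp Hu Hl] Ho]; split.
  rewrite RE rev_uniq Hu last_rcons eqxx size_rcons size_rev -(size_rcons m b) Ho /= andbT.
  have := rev_path e a (rcons m b); rewrite last_rcons belast_rcons rev_cons => ->.
  by rewrite andbT (@eq_path _ _ e) // => x y; rewrite /= esym.
move=> u w /memE [s1 [s2 E]]; apply/memE; exists (rev s2), (rev s1).
move: E; rewrite RE => /(congr1 rev); rewrite revK => ->.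
by rewrite rev_cat /= rev_cons rev_cons -!cats1 -!catA.
Qed.
End Gen.

Lemma int_sub (T : finType) (A : T) R t :
  uniq (A :: R) -> t \in interior A R -> (t \in R) && (t != last A R).
Proof.
case: R => [|y q]; first by rewrite /interior.
rewrite cons_uniq => /andP [_ Hu]; rewrite /interior /=.
have E := lastI y q; rewrite E rcons_uniq in Hu; case/andP: Hu => Hl _ Ht.
rewrite E mem_rcons inE Ht orbT /=; apply/eqP => E'; move: Hl; by rewrite -E' Ht.
Qed.

Lemma uniq_catP (T : eqType) (s1 s2 : seq T) :
  uniq s1 -> uniq s2 -> (forall u, u \in s1 -> u \in s2 -> False) -> uniq (s1 ++ s2).
Proof.
move=> H1 H2 H; rewrite cat_uniq H1 H2 andbT /=; apply/hasPn => u Hu; apply/negP => Hu1.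
exact: (H u).
Qed.

Lemma odd_cat3 (T : finType) (r : rel T) A M1 M2 B s1 s2 s3 :
  odd_path r A M1 s1 -> odd_path r M1 M2 s2 -> odd_path r M2 B s3 ->
  uniq (A :: s1 ++ s2 ++ s3) -> odd_path r A B (s1 ++ s2 ++ s3).
Proof.
rewrite /odd_path /is_path => /andP [/and3P [P1 _ /eqP L1] O1]
  /andP [/and3P [P2 _ /eqP L2] O2] /andP [/and3P [P3 _ /eqP L3] O3] Hu.
rewrite Hu !cat_path P1 L1 P2 !last_cat L1 L2 P3 L3 eqxx !size_cat !oddD O1 O2 O3.
done.
Qed.


Section Lift.
Variables (V W : finType) (e : rel V) (f : rel W).
Hypotheses (eirr : irreflexive e) (firr : irreflexive f).

Definition LG (h : W) (p : seq V) : seq (V * W) := map (fun g => (g, h)) p.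
Definition LH (g : V) (q : seq W) : seq (V * W) := map (fun w => (g, w)) q.
Definition liftG (h : W) (u : V * V) : (V * W) * (V * W) := ((u.1, h), (u.2, h)).
Definition liftH (g : V) (u : W * W) : (V * W) * (V * W) := ((g, u.1), (g, u.2)).

Lemma mem_LG h p u : (u \in LG h p) = (u.2 == h) && (u.1 \in p).
Proof.
case: u => g w /=; apply/mapP/andP => [[g' Hg [-> ->]]|[/eqP -> Hg]]; first by rewrite eqxx.
by exists g.
Qed.

Lemma mem_LH g q u : (u \in LH g q) = (u.1 == g) && (u.2 \in q).
Proof.
case: u => g' w /=; apply/mapP/andP => [[w' Hw [-> ->]]|[/eqP -> Hw]]; first by rewrite eqxx.
by exists w.
Qed.

Lemma uniq_LG h p : uniq (LG h p) = uniq p.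
Proof. by apply: map_inj_uniq => g g' [->]. Qed.
Lemma uniq_LH g q : uniq (LH g q) = uniq q.
Proof. by apply: map_inj_uniq => w w' [->]. Qed.

Lemma pe_LG h a p : path_edges (a, h) (LG h p) = map (liftG h) (path_edges a p).
Proof. by elim: p a => [|g p IH] a //=; rewrite /path_edges /= -IH. Qed.
Lemma pe_LH g x q : path_edges (g, x) (LH g q) = map (liftH g) (path_edges x q).
Proof. by elim: q x => [|w q IH] x //=; rewrite /path_edges /= -IH. Qed.

Lemma last_LG h a p : last (a, h) (LG h p) = (last a p, h).
Proof. by rewrite /LG -[(a, h)]/((fun g => (g, h)) a) last_map. Qed.
Lemma last_LH g x q : last (g, x) (LH g q) = (g, last x q).
Proof. by rewrite /LH -[(g, x)]/((fun w => (g, w)) x) last_map. Qed.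

Lemma path_LG h a p : path (cart_rel e f) (a, h) (LG h p) = path e a p.
Proof.
rewrite /LG -[(a, h)]/((fun g => (g, h)) a) path_map; apply: eq_path => g g'.
by rewrite /relpre /cart_rel /= firr eqxx andbF.
Qed.
Lemma path_LH g x q : path (cart_rel e f) (g, x) (LH g q) = path f x q.
Proof.
rewrite /LH -[(g, x)]/((fun w => (g, w)) x) path_map; apply: eq_path => w w'.
by rewrite /relpre /cart_rel /= eirr eqxx andbF orbF.
Qed.

Lemma odd_LG h a b p : odd_path e a b p -> odd_path (cart_rel e f) (a, h) (b, h) (LG h p).
Proof.
rewrite /odd_path /is_path path_LG size_map last_LG /LG -map_cons.
rewrite (map_inj_uniq (f := fun g => (g, h))); last by move=> g g' [].
by rewrite xpair_eqE eqxx andbT.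
Qed.
Lemma odd_LH g x y q : odd_path f x y q -> odd_path (cart_rel e f) (g, x) (g, y) (LH g q).
Proof.
rewrite /odd_path /is_path path_LH size_map last_LH /LH -map_cons.
rewrite (map_inj_uniq (f := fun w => (g, w))); last by move=> w w' [].
by rewrite xpair_eqE eqxx.
Qed.

Definition dj (T : finType) (L1 L2 : seq (T * T)) :=
  all (fun u => all (fun v => ~~ same_edge u v) L2) L1.

Lemma same_edge_sym (T : finType) (u v : T * T) : same_edge u v = same_edge v u.
Proof.
rewrite /same_edge [u.1 == _]eq_sym [u.2 == _]eq_sym [u.1 == v.2]eq_sym [u.2 == v.1]eq_sym.
by rewrite [(v.2 == u.1) && _]andbC.
Qed.

Lemma dj_sym (T : finType) (L1 L2 : seq (T * T)) : dj L1 L2 = dj L2 L1.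
Proof.
apply/allP/allP => H u Hu; apply/allP => v Hv; rewrite same_edge_sym.
  by have /allP := H v Hv; apply.
by have /allP := H v Hv; apply.
Qed.

Lemma dj_catl (T : finType) (L1 L2 L : seq (T * T)) : dj (L1 ++ L2) L = dj L1 L && dj L2 L.
Proof. by rewrite /dj all_cat. Qed.
Lemma dj_catr (T : finType) (L1 L2 L : seq (T * T)) : dj L (L1 ++ L2) = dj L L1 && dj L L2.
Proof. by rewrite dj_sym dj_catl !(dj_sym _ L). Qed.

Lemma djGG_h h h' (L1 L2 : seq (V * V)) : h != h' -> dj (map (liftG h) L1) (map (liftG h') L2).
Proof.
move=> Hh; apply/allP => _ /mapP [u _ ->]; apply/allP => _ /mapP [v _ ->].
rewrite /same_edge /= !xpair_eqE (negbTE Hh) !andbF //.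
Qed.
Lemma djHH_g g g' (L1 L2 : seq (W * W)) : g != g' -> dj (map (liftH g) L1) (map (liftH g') L2).
Proof.
move=> Hg; apply/allP => _ /mapP [u _ ->]; apply/allP => _ /mapP [v _ ->].
rewrite /same_edge /= !xpair_eqE (negbTE Hg) //.
Qed.
Lemma djGG h (L1 L2 : seq (V * V)) : dj L1 L2 -> dj (map (liftG h) L1) (map (liftG h) L2).
Proof.
move=> /allP H; apply/allP => _ /mapP [u Hu ->]; apply/allP => _ /mapP [v Hv ->].
have /allP := H u Hu => /(_ v Hv).
by rewrite /same_edge /= !xpair_eqE !eqxx !andbT.
Qed.
Lemma djHH g (L1 L2 : seq (W * W)) : dj L1 L2 -> dj (map (liftH g) L1) (map (liftH g) L2).
Proof.
move=> /allP H; apply/allP => _ /mapP [u Hu ->]; apply/allP => _ /mapP [v Hv ->].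
have /allP := H u Hu => /(_ v Hv).
by rewrite /same_edge /= !xpair_eqE !eqxx.
Qed.
Lemma djGH h g (L1 : seq (V * V)) (L2 : seq (W * W)) :
  (forall u, u \in L1 -> u.1 != u.2) -> dj (map (liftG h) L1) (map (liftH g) L2).
Proof.
move=> H; apply/allP => _ /mapP [u Hu ->]; apply/allP => _ /mapP [v Hv ->].
have := H u Hu; rewrite /same_edge /= !xpair_eqE.
by case: (u.1 =P g) => [->|] //=; case: (u.2 =P g) => [->|] //=; rewrite ?eqxx //= !andbF.
Qed.
Lemma djHG h g (L1 : seq (W * W)) (L2 : seq (V * V)) :
  (forall u, u \in L2 -> u.1 != u.2) -> dj (map (liftH g) L1) (map (liftG h) L2).
Proof. by move=> H; rewrite dj_sym; apply: djGH. Qed.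

End Lift.

Section PE.
Variables (T : finType) (r : rel T).
Lemma pe_rel a p u : path r a p -> u \in path_edges a p -> r u.1 u.2.
Proof.
elim: p a => [|b p IH] a //= /andP [Hab Hp]; rewrite /path_edges /= inE => /orP [/eqP -> //|].
exact: IH.
Qed.
Lemma pe_neq a p u : irreflexive r -> path r a p -> u \in path_edges a p -> u.1 != u.2.
Proof.
move=> Hirr Hp Hu; have := pe_rel Hp Hu; by case: (u.1 =P u.2) => [->|//]; rewrite Hirr.
Qed.
Lemma dj_swap (L1 L2 L2' : seq (T * T)) :
  (forall u w, (u, w) \in L2' -> (w, u) \in L2) -> dj L1 L2 -> dj L1 L2'.
Proof.
move=> Hs /allP H; apply/allP => u Hu; apply/allP => [[v1 v2]] Hv.
have /allP := H u Hu => /(_ _ (Hs _ _ Hv)).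
by rewrite /same_edge /= orbC [(u.1 == v1) && _]andbC.
Qed.
End PE.


Definition K3data (V : finType) (e : rel V) (a b c : V) (mab mac mbc : seq V) :=
 [/\ [/\ odd_path e a b (rcons mab b), odd_path e a c (rcons mac c) & odd_path e b c (rcons mbc c)],
     [/\ dj (path_edges a (rcons mab b)) (path_edges a (rcons mac c)),
         dj (path_edges a (rcons mab b)) (path_edges b (rcons mbc c)) &
         dj (path_edges a (rcons mac c)) (path_edges b (rcons mbc c))],
     [/\ a != b, a != c & b != c] &
     [/\ all (fun t => t \notin mab) [:: a; b; c], all (fun t => t \notin mac) [:: a; b; c] &
         all (fun t => t \notin mbc) [:: a; b; c]]].

Lemma odd_nil (V : finType) (e : rel V) a b p : odd_path e a b p -> p != [::].
Proof. by case: p => //; rewrite /odd_path andbF. Qed.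

Lemma odd_rcons (V : finType) (e : rel V) a b p :
  odd_path e a b p -> p = rcons (interior a p) b.
Proof.
move=> H; rewrite {1}(rcons_form a (odd_nil H)).
by case/andP: H => /and3P [_ _ /eqP ->].
Qed.

Lemma K3_extract (V : finType) (e : rel V) :
  toi_immersion e 3 -> exists a b c mab mac mbc, K3data e a b c mab mac mbc.
Proof.
move=> [fa [P [inj Hodd Hdisj Hint]]].
pose i0 : 'I_3 := @Ordinal 3 0 isT.
pose i1 : 'I_3 := @Ordinal 3 1 isT.
pose i2 : 'I_3 := @Ordinal 3 2 isT.
have O01 := Hodd i0 i1 isT; have O02 := Hodd i0 i2 isT; have O12 := Hodd i1 i2 isT.
exists (fa i0), (fa i1), (fa i2), (interior (fa i0) (P i0 i1)),
  (interior (fa i0) (P i0 i2)), (interior (fa i1) (P i1 i2)).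
rewrite /K3data -(odd_rcons O01) -(odd_rcons O02) -(odd_rcons O12); split.
- by split.
- split; apply: Hdisj => //.
- have H : forall i j : 'I_3, i != j -> fa i != fa j.
    by move=> i j Hij; apply/eqP => /inj E; move: Hij; rewrite E eqxx.
  by split; apply: H.
- by split; rewrite /= !Hint.
Qed.

Lemma odd_path_path (T : finType) (r : rel T) a b p : odd_path r a b p -> path r a p.
Proof. by case/andP => /and3P []. Qed.
Lemma odd_path_uniq (T : finType) (r : rel T) a b p : odd_path r a b p -> uniq (a :: p).
Proof. by case/andP => /and3P []. Qed.
Lemma odd_path_last (T : finType) (r : rel T) a b p : odd_path r a b p -> last a p = b.
Proof. by case/andP => /and3P [_ _ /eqP]. Qed.

Lemma pe_neq' (T : finType) (r : rel T) a b p :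
  irreflexive r -> odd_path r a b p -> forall u, u \in path_edges a p -> u.1 != u.2.
Proof. by move=> Hi /odd_path_path Hp u; apply: pe_neq. Qed.

Lemma not_int (T : finType) (r : rel T) A B R t :
  odd_path r A B R -> (t \in R -> t = B) -> t \notin interior A R.
Proof.
move=> Ho Ht; apply/negP => /(int_sub (odd_path_uniq Ho)) /andP [H1 H2].
by move: H2; rewrite (odd_path_last Ho) (Ht H1) eqxx.
Qed.

Lemma ord4_cases (P : 'I_4 -> Prop) :
  P (@Ordinal 4 0 isT) -> P (@Ordinal 4 1 isT) -> P (@Ordinal 4 2 isT) -> P (@Ordinal 4 3 isT) ->
  forall i, P i.
Proof.
move=> P0 P1 P2 P3 [[|[|[|[|i]]]] Hi] //.
- by rewrite (bool_irrelevance Hi isT).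
- by rewrite (bool_irrelevance Hi isT).
- by rewrite (bool_irrelevance Hi isT).
- by rewrite (bool_irrelevance Hi isT).
Qed.

Ltac atom := first [ by apply: djGH | by apply: djHG | by apply: djGG_h | by apply: djHH_g
                   | by apply: djGG | by apply: djHH ].

Section Prod.
Variables (V W : finType) (e : rel V) (f : rel W).
Hypotheses (esym : symmetric e) (eirr : irreflexive e) (fsym : symmetric f) (firr : irreflexive f).
Variables (a b c : V) (mab mac mbc : seq V) (x y z : W) (nxy nxz nyz : seq W).
Hypothesis HG : K3data e a b c mab mac mbc.
Hypothesis HH : K3data f x y z nxy nxz nyz.

Lemma prod_imm : toi_immersion (cart_rel e f) 4.
Proof.
case: HG => [[oab oac obc] [dab_ac dab_bc dac_bc] [nab nac nbc]
   [/and4P [a1 b1 c1 _] /and4P [a2 b2 c2 _] /and4P [a3 b3 c3 _]]].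
case: HH => [[oxy oxz oyz] [dxy_xz dxy_yz dxz_yz] [nxy' nxz' nyz']
   [/and4P [x1 y1 z1 _] /and4P [x2 y2 z2 _] /and4P [x3 y3 z3 _]]].
have [oba eba] := rev_odd esym oab.
have [ocb ecb] := rev_odd esym obc.
have [ozy ezy] := rev_odd fsym oyz.
have nba : b != a by rewrite eq_sym.
have nca : c != a by rewrite eq_sym.
have ncb : c != b by rewrite eq_sym.
have nyx : y != x by rewrite eq_sym.
have nzx : z != x by rewrite eq_sym.
have nzy : z != y by rewrite eq_sym.
have FF := (negbTE nab, negbTE nac, negbTE nbc, negbTE nba, negbTE nca, negbTE ncb,
  negbTE nxy', negbTE nxz', negbTE nyz', negbTE nyx, negbTE nzx, negbTE nzy).
have MM := (negbTE a1, negbTE b1, negbTE c1, negbTE a2, negbTE b2, negbTE c2,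
  negbTE a3, negbTE b3, negbTE c3).
have NN := (negbTE x1, negbTE y1, negbTE z1, negbTE x2, negbTE y2, negbTE z2,
  negbTE x3, negbTE y3, negbTE z3).
pose R01 := LG x (rcons mab b).
pose R02 := LH a (rcons nxy y).
pose R03 := LG x (rcons mac c) ++ LH c (rcons nxy y) ++ LG y (rcons (rev mbc) b).
pose R12 := LH b (rcons nxz z) ++ LG z (rcons (rev mab) a) ++ LH a (rcons (rev nyz) y).
pose R13 := LH b (rcons nxy y).
pose R23 := LG y (rcons mab b).
have O01 : odd_path (cart_rel e f) (a, x) (b, x) R01 by apply: odd_LG.
have O02 : odd_path (cart_rel e f) (a, x) (a, y) R02 by apply: odd_LH.
have O13 : odd_path (cart_rel e f) (b, x) (b, y) R13 by apply: odd_LH.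
have O23 : odd_path (cart_rel e f) (a, y) (b, y) R23 by apply: odd_LG.
have O03 : odd_path (cart_rel e f) (a, x) (b, y) R03.
  apply: (@odd_cat3 _ _ _ (c, x) (c, y)); [by apply: odd_LG | by apply: odd_LH | by apply: odd_LG | ].
  rewrite -cat_cons; apply: uniq_catP.
  - by rewrite -[_ :: _]/(LG x (a :: rcons mac c)) uniq_LG (odd_path_uniq oac).
  - apply: uniq_catP; first by rewrite uniq_LH; case/andP: (odd_path_uniq oxy).
      by rewrite uniq_LG; case/andP: (odd_path_uniq ocb).
    move=> [g w]; rewrite mem_LH mem_LG /= => /andP [/eqP -> _] /andP [_].
    by rewrite mem_rcons inE mem_rev !FF !MM.
  move=> [g w]; rewrite -[_ :: _]/(LG x (a :: rcons mac c)) mem_LG /= => /andP [/eqP -> _].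
  by rewrite mem_cat mem_LH mem_LG /= mem_rcons inE !FF !NN andbF.
have O12 : odd_path (cart_rel e f) (b, x) (a, y) R12.
  apply: (@odd_cat3 _ _ _ (b, z) (a, z)); [by apply: odd_LH | by apply: odd_LG | by apply: odd_LH | ].
  rewrite -cat_cons; apply: uniq_catP.
  - by rewrite -[_ :: _]/(LH b (x :: rcons nxz z)) uniq_LH (odd_path_uniq oxz).
  - apply: uniq_catP; first by rewrite uniq_LG; case/andP: (odd_path_uniq oba).
      by rewrite uniq_LH; case/andP: (odd_path_uniq ozy).
    move=> [g w]; rewrite mem_LG mem_LH /= => /andP [/eqP -> _] /andP [_].
    by rewrite mem_rcons inE mem_rev !FF !NN.
  move=> [g w]; rewrite -[_ :: _]/(LH b (x :: rcons nxz z)) mem_LH /= => /andP [/eqP -> _].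
  by rewrite mem_cat mem_LH mem_LG /= mem_rcons inE mem_rev !FF !MM andbF.
have ED : forall (T : finType) (A A' : T) p p',
  edge_disjoint A p A' p' = dj (path_edges A p) (path_edges A' p') by [].
have PE01 : path_edges (a, x) R01 = map (liftG x) (path_edges a (rcons mab b)) by apply: pe_LG.
have PE02 : path_edges (a, x) R02 = map (liftH a) (path_edges x (rcons nxy y)) by apply: pe_LH.
have PE13 : path_edges (b, x) R13 = map (liftH b) (path_edges x (rcons nxy y)) by apply: pe_LH.
have PE23 : path_edges (a, y) R23 = map (liftG y) (path_edges a (rcons mab b)) by apply: pe_LG.
have PE03 : path_edges (a, x) R03 = map (liftG x) (path_edges a (rcons mac c)) ++
   (map (liftH c) (path_edges x (rcons nxy y)) ++ map (liftG y) (path_edges c (rcons (rev mbc) b))).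
  by rewrite /R03 path_edges_cat last_LG last_rcons path_edges_cat last_LH last_rcons !pe_LG !pe_LH.
have PE12 : path_edges (b, x) R12 = map (liftH b) (path_edges x (rcons nxz z)) ++
   (map (liftG z) (path_edges b (rcons (rev mab) a)) ++ map (liftH a) (path_edges z (rcons (rev nyz) y))).
  by rewrite /R12 path_edges_cat last_LH last_rcons path_edges_cat last_LG last_rcons !pe_LG !pe_LH.
have n1 := pe_neq' eirr oab. have n2 := pe_neq' eirr oac. have n3 := pe_neq' eirr ocb.
have n4 := pe_neq' eirr oba. have n5 := pe_neq' firr oxy. have n6 := pe_neq' firr oxz.
have n7 := pe_neq' firr ozy.
have D1 := dab_ac. have D1' := dab_ac; rewrite dj_sym in D1'.
have D2 := dj_swap ecb dab_bc. have D2' := D2; rewrite dj_sym in D2'.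
have D3 := dj_swap ezy dxy_yz. have D3' := D3; rewrite dj_sym in D3'.
have D4 := dxy_xz. have D4' := dxy_xz; rewrite dj_sym in D4'.
exists (fun i : 'I_4 => nth (a, x) [:: (a, x); (b, x); (a, y); (b, y)] i).
exists (fun i j : 'I_4 => match nat_of_ord i, nat_of_ord j with
   | 0, 1 => R01 | 0, 2 => R02 | 0, 3 => R03 | 1, 2 => R12 | 1, 3 => R13 | 2, 3 => R23
   | _, _ => [::] end).
split.
{ move=> i j; elim/ord4_cases: i; elim/ord4_cases: j => //=.
  all: move=> E; exfalso; move: (congr1 fst E) (congr1 snd E) => /= E1 E2.
  all: first [by rewrite E1 eqxx in nab | by rewrite E1 eqxx in nba
             | by rewrite E2 eqxx in nxy' | by rewrite E2 eqxx in nyx]. }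
{ move=> i j; elim/ord4_cases: i; elim/ord4_cases: j => //= _. }
{ move=> i j i' j'; elim/ord4_cases: i; elim/ord4_cases: j; elim/ord4_cases: i';
    elim/ord4_cases: j' => //= _ _.
  all: rewrite ?eqxx // => _.
  all: rewrite ED ?PE01 ?PE02 ?PE03 ?PE12 ?PE13 ?PE23 ?dj_catl ?dj_catr.
  all: repeat (apply/andP; split).
  all: atom. }
{ move=> i j k; elim/ord4_cases: i; elim/ord4_cases: j; elim/ord4_cases: k => //= _.
  all: first [apply: (not_int O01) | apply: (not_int O02) | apply: (not_int O03)
             | apply: (not_int O12) | apply: (not_int O13) | apply: (not_int O23)].
  all: rewrite /R01 /R02 /R03 /R12 /R13 /R23 ?mem_cat ?mem_LG ?mem_LH /= ?mem_rcons ?inE ?mem_rev.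
  all: rewrite ?FF ?MM ?NN ?eqxx ?andbF ?andbT ?orbF //. }
Qed.
End Prod.


Section Count.
Variable T : finType.
Implicit Types (a : T) (p : seq T).

Definition swp (w : T * T) := (w.2, w.1).
Definition dedges a p := flatten [seq [:: u; swp u] | u <- path_edges a p].

Lemma mem_dflat (L : seq (T * T)) w :
  (w \in flatten [seq [:: u; swp u] | u <- L]) = (w \in L) || (swp w \in L).
Proof.
case: w => w1 w2; elim: L => //= u L IH; rewrite !inE IH.
case: u => [u1 u2]; rewrite /swp /= !xpair_eqE.
case: (w1 == u1); case: (w2 == u2); case: (w1 == u2); case: (w2 == u1); by case: (_ \in L); case: (_ \in L).
Qed.

Lemma mem_dedges a p w : (w \in dedges a p) = (w \in path_edges a p) || (swp w \in path_edges a p).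
Proof. exact: mem_dflat. Qed.

Lemma size_dedges a p : size (dedges a p) = 2 * size p.
Proof.
elim: p a => [|b q IH] a //=; rewrite /dedges /path_edges /= -/(path_edges b q) -/(dedges b q).
by rewrite IH mulnS.
Qed.

Lemma pe_mem a p u v : (u, v) \in path_edges a p -> (u \in a :: p) && (v \in p).
Proof.
elim: p a => [|b q IH] a //=; rewrite /path_edges /= inE => /orP [/eqP [-> ->]|].
  by rewrite !inE !eqxx.
move/IH => /andP [H1 H2]; by rewrite in_cons H1 orbT /= in_cons H2 orbT.
Qed.

Lemma uniq_dedges a p : uniq (a :: p) -> uniq (dedges a p).
Proof.
elim: p a => [|b q IH] a //= /andP [Ha Hu].
rewrite /dedges /path_edges /= -/(path_edges b q) -/(dedges b q).
have Hbq : uniq (b :: q) by [].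
rewrite inE in Ha; case/norP: Ha => Hab Haq.
have C1 : (a, b) \notin path_edges b q.
  by apply/negP => /pe_mem /andP [H _]; rewrite inE (negbTE Hab) (negbTE Haq) in H.
have C2 : (b, a) \notin path_edges b q.
  by apply/negP => /pe_mem /andP [_ H]; rewrite H in Haq.
rewrite /swp /= in_cons negb_or xpair_eqE (negbTE Hab) /= !mem_dedges /swp /= !negb_or C1 C2 /=.
by rewrite IH.
Qed.

Lemma dedges_disj a p a' p' w :
  edge_disjoint a p a' p' -> w \in dedges a p -> w \in dedges a' p' -> False.
Proof.
move=> /allP H; rewrite !mem_dedges.
have S : forall u v, (u == v) || (swp u == v) -> same_edge u v.
  move=> [u1 u2] [v1 v2]; rewrite /swp /same_edge /= !xpair_eqE.
  by case/orP => /andP [/eqP -> /eqP ->]; rewrite !eqxx ?orbT.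
have K : forall u v, u \in path_edges a p -> v \in path_edges a' p' -> same_edge u v -> False.
  by move=> u v Hu Hv Hs; have /allP := H u Hu => /(_ v Hv); rewrite Hs.
case/orP => H1; case/orP => H2.
- by apply: (K _ _ H1 H2); apply: S; rewrite eqxx.
- apply: (K _ _ H1 H2); apply: S; by rewrite eqxx orbT.
- apply: (K _ _ H1 H2); apply: S; rewrite /swp; case: w {H1 H2} => ? ? /=; by rewrite eqxx orbT.
- apply: (K _ _ H1 H2); apply: S; by rewrite eqxx.
Qed.

Lemma dedges_rel (r : rel T) a p w :
  symmetric r -> path r a p -> w \in dedges a p -> r w.1 w.2.
Proof.
move=> Hs Hp; rewrite mem_dedges => /orP [H|H].
  exact: pe_rel Hp H.
by have := pe_rel Hp H; rewrite /swp /= Hs.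
Qed.

Lemma count_edges (I : eqType) (idx : seq I) (F : I -> T * seq T) (U : seq (T * T)) :
  uniq idx -> (forall i, i \in idx -> uniq ((F i).1 :: (F i).2)) ->
  (forall i j, i \in idx -> j \in idx -> i != j -> edge_disjoint (F i).1 (F i).2 (F j).1 (F j).2) ->
  (forall i w, i \in idx -> w \in dedges (F i).1 (F i).2 -> w \in U) ->
  2 * sumn [seq size (F i).2 | i <- idx] <= size U.
Proof.
move=> Hidx Hu Hd HU.
pose L := flatten [seq dedges (F i).1 (F i).2 | i <- idx].
have -> : 2 * sumn [seq size (F i).2 | i <- idx] = size L.
  rewrite /L; elim: (idx) => //= i s IH; by rewrite size_cat mulnDr IH size_dedges.
apply: uniq_leq_size.
  rewrite /L; clear L; elim: idx Hidx Hu Hd {HU} => //= i s IH /andP [His Hs] Hu Hd.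
  rewrite cat_uniq (uniq_dedges (Hu i (mem_head _ _))).
  rewrite IH //; first last.
  - by move=> i' j' Hi Hj; apply: Hd; rewrite inE ?Hi ?Hj orbT.
  - by move=> i' Hi; apply: Hu; rewrite inE Hi orbT.
  rewrite andbT; apply/hasPn => w /flattenP [ds /mapP [j Hj ->]] Hw; apply/negP => Hw'.
  apply: (dedges_disj _ Hw' Hw); apply: Hd; rewrite ?inE ?eqxx ?Hj ?orbT //.
  by apply/eqP => E; rewrite E Hj in His.
move=> w /flattenP [ds /mapP [j Hj ->]] Hw; exact: HU Hw.
Qed.

Lemma sumn_le_eq (I : eqType) (idx : seq I) (F G : I -> nat) :
  (forall i, i \in idx -> F i <= G i) ->
  sumn [seq G i | i <- idx] <= sumn [seq F i | i <- idx] ->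
  forall i, i \in idx -> G i = F i.
Proof.
elim: idx => //= j s IH H Hs i; rewrite inE => /orP [/eqP ->|Hi].
  have H1 := H j (mem_head _ _).
  have H2 : sumn [seq F i | i <- s] <= sumn [seq G i | i <- s].
    elim: (s) H => //= k s' IH' H'; apply: leq_add; first by apply: H'; rewrite !inE eqxx orbT.
    by apply: IH' => i' Hi'; apply: H'; move: Hi'; rewrite !inE => /orP [->|->]; rewrite ?orbT.
  apply/eqP; rewrite eqn_leq H1 andbT.
  by rewrite -(leq_add2r (sumn [seq G i | i <- s])); apply: (leq_trans Hs); rewrite leq_add2l.
apply: IH Hi => [i' Hi'|]; first by apply: H; rewrite inE Hi' orbT.
have H1 := H j (mem_head _ _).
rewrite -(leq_add2l (G j)); apply: (leq_trans Hs); by rewrite leq_add2r.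
Qed.
End Count.


Definition vn : seq nat := iota 0 9.
Definition adjn (p q : nat) : bool :=
  ~~ eqn p q && (eqn (p %/ 3) (q %/ 3) || eqn (p %% 3) (q %% 3)).
Fixpoint memn (x : nat) (s : seq nat) : bool :=
  if s is y :: s' then (if eqn x y then true else memn x s') else false.
Fixpoint uniqn (s : seq nat) : bool :=
  if s is y :: s' then (if memn y s' then false else uniqn s') else true.
Definition prs : seq (nat * nat) :=
  [:: (0,1);(0,2);(0,3);(0,4);(1,2);(1,3);(1,4);(2,3);(2,4);(3,4)]%N.
Definition nthn (s : seq nat) i := nth 0 s i.
Definition lown (s : seq nat) :=
  sumn [seq (if adjn (nthn s pq.1) (nthn s pq.2) then 1 else 3) | pq <- prs].
Definition admn (s : seq nat) i j x y :=
  if memn x s then false else if memn y s then false else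
  if adjn (nthn s i) x then if adjn x y then adjn y (nthn s j) else false else false.
Definition same_edgen (u v : nat * nat) : bool :=
  (eqn u.1 v.1 && eqn u.2 v.2) || (eqn u.1 v.2 && eqn u.2 v.1).
Definition edn (a : nat) (p : seq nat) := zip (a :: p) p.
Definition disjn (a : nat) p a' p' :=
  all (fun u => all (fun v => ~~ same_edgen u v) (edn a' p')) (edn a p).
Definition Dn (c c' : seq (nat * nat)) :=
  all (fun u => all (fun v => ~~ same_edgen u v) c') c.
Definition candn (s : seq nat) (pq : nat * nat) x y :=
  edn (nthn s pq.1) [:: x; y; nthn s pq.2].
Fixpoint exch (s : seq nat) (na : seq (nat * nat)) (acc : seq (seq (nat * nat))) : bool :=
  if na is pq :: na' then
    has (fun x => has (fun y => if admn s pq.1 pq.2 x y then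
       if all (Dn (candn s pq x y)) acc then exch s na' (candn s pq x y :: acc) else false
       else false) vn) vn
  else true.
Definition nadj (s : seq nat) := filter (fun pq => ~~ adjn (nthn s pq.1) (nthn s pq.2)) prs.
Definition checkn (s : seq nat) :=
  if uniqn s then
    if 18 < lown s then true else
    if eqn (lown s) 18 then ~~ exch s (nadj s) [::] else false
  else true.
Definition allcheck :=
  all (fun v0 => all (fun v1 => all (fun v2 => all (fun v3 => all (fun v4 =>
    checkn [:: v0; v1; v2; v3; v4]) vn) vn) vn) vn) vn.
Lemma allcheckT : allcheck.
Proof. vm_compute. reflexivity. Qed.

Lemma memnE x s : memn x s = (x \in s).
Proof. elim: s => //= y s IH; rewrite inE IH -eqnE; by case: eqn. Qed.
Lemma uniqnE s : uniqn s = uniq s.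
Proof. elim: s => //= y s IH; by rewrite memnE IH; case: (y \in s). Qed.

Lemma exch_complete s (na : seq (nat * nat)) acc (ch : nat * nat -> nat * nat) :
  uniq na ->
  (forall pq, pq \in na -> ((ch pq).1 \in vn) && ((ch pq).2 \in vn)) ->
  (forall pq, pq \in na -> admn s pq.1 pq.2 (ch pq).1 (ch pq).2) ->
  (forall pq pq', pq \in na -> pq' \in na -> pq != pq' ->
     Dn (candn s pq (ch pq).1 (ch pq).2) (candn s pq' (ch pq').1 (ch pq').2)) ->
  (forall pq, pq \in na -> all (Dn (candn s pq (ch pq).1 (ch pq).2)) acc) ->
  exch s na acc.
Proof.
elim: na acc => // pq na IH acc; rewrite cons_uniq => /andP [Hpq Hu] Hv Ha Hd Hacc.
cbn [exch].
have /andP [v1 v2] := Hv pq (mem_head _ _).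
apply/hasP; exists (ch pq).1 => //; apply/hasP; exists (ch pq).2 => //.
rewrite Ha ?mem_head // Hacc ?mem_head //.
apply: IH => //.
- by move=> pq' H; apply: Hv; rewrite inE H orbT.
- by move=> pq' H; apply: Ha; rewrite inE H orbT.
- by move=> p1 p2 H1 H2; apply: Hd; rewrite inE ?H1 ?H2 orbT.
move=> pq' H /=; rewrite Hacc ?inE ?H ?orbT // andbT; apply: Hd; rewrite ?inE ?H ?eqxx ?orbT //.
by apply/eqP => E; rewrite -E H in Hpq.
Qed.


Definition V3 : finType := ('I_3 * 'I_3)%type.
Definition e3 : rel V3 := cart_rel (complete_rel 3) (complete_rel 3).
Definition o0 : 'I_3 := @Ordinal 3 0 isT.
Definition o1 : 'I_3 := @Ordinal 3 1 isT.
Definition o2 : 'I_3 := @Ordinal 3 2 isT.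
Definition vs3 : seq V3 := [seq (i, j) | i <- [:: o0; o1; o2], j <- [:: o0; o1; o2]].
Definition code (v : V3) : nat := 3 * v.1 + v.2.
Definition U3 : seq (V3 * V3) := filter (fun w => e3 w.1 w.2) [seq (u, v) | u <- vs3, v <- vs3].

Lemma ord3_cases (P : 'I_3 -> Prop) : P o0 -> P o1 -> P o2 -> forall i, P i.
Proof.
move=> P0 P1 P2 [[|[|[|i]]] Hi] //.
- by rewrite (bool_irrelevance Hi isT).
- by rewrite (bool_irrelevance Hi isT).
- by rewrite (bool_irrelevance Hi isT).
Qed.

Lemma V3_cases (P : V3 -> Prop) :
  (forall i j, P (i, j)) -> forall v, P v.
Proof. by move=> H [i j]. Qed.

Lemma mem_vs3 v : v \in vs3.
Proof. by case: v => i j; elim/ord3_cases: i; elim/ord3_cases: j; vm_compute. Qed.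

Lemma code_inj : injective code.
Proof.
move=> [i j] [i' j']; elim/ord3_cases: i; elim/ord3_cases: j; elim/ord3_cases: i';
  elim/ord3_cases: j' => //.
Qed.

Lemma code_vn v : code v \in vn.
Proof. by case: v => i j; elim/ord3_cases: i; elim/ord3_cases: j; vm_compute. Qed.

Lemma e3_code u v : e3 u v = adjn (code u) (code v).
Proof.
case: u v => [i j] [i' j']; elim/ord3_cases: i; elim/ord3_cases: j; elim/ord3_cases: i';
  elim/ord3_cases: j' => //.
Qed.

Lemma size_U3 : size U3 = 36.
Proof. by vm_compute. Qed.

Lemma cart_sym (V W : finType) (e : rel V) (f : rel W) :
  symmetric e -> symmetric f -> symmetric (cart_rel e f).
Proof. by move=> He Hf [g h] [g' h']; rewrite /cart_rel /= He Hf eq_sym [h == h']eq_sym. Qed.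
Lemma complete_sym n : symmetric (complete_rel n).
Proof. by move=> u v; rewrite /complete_rel eq_sym. Qed.
Lemma complete_irr n : irreflexive (complete_rel n).
Proof. by move=> u; rewrite /complete_rel eqxx. Qed.
Lemma e3_sym : symmetric e3.
Proof. apply: cart_sym; exact: complete_sym. Qed.

Lemma sumn_map_le (I : eqType) (idx : seq I) (F G : I -> nat) :
  (forall i, i \in idx -> F i <= G i) ->
  sumn [seq F i | i <- idx] <= sumn [seq G i | i <- idx].
Proof.
elim: idx => //= j s IH H; apply: leq_add; first by apply: H; rewrite inE eqxx.
by apply: IH => i Hi; apply: H; rewrite inE Hi orbT.
Qed.

Definition cc (u : V3 * V3) := (code u.1, code u.2).

Lemma edn_map a p : edn (code a) (map code p) = map cc (path_edges a p).
Proof. by elim: p a => [|b p IH] a //=; rewrite /edn /path_edges /= -IH. Qed.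

Lemma Dn_map (L1 L2 : seq (V3 * V3)) : Dn (map cc L1) (map cc L2) = dj L1 L2.
Proof.
rewrite /Dn /dj all_map; apply: eq_all => u /=; rewrite all_map; apply: eq_all => v /=.
by rewrite /same_edgen /same_edge /cc /= !eqnE !(inj_eq code_inj).
Qed.

Arguments Dn : simpl never.
Arguments edn : simpl never.
Arguments candn : simpl never.
Arguments edge_disjoint : simpl never.
Lemma noK5 : ~ toi_immersion e3 5.
Proof.
move=> [f [P [finj Hodd Hdisj Hint]]].
pose c k := code (f (inord k)).
pose s := [:: c 0; c 1; c 2; c 3; c 4].
have Hchk : checkn s.
  have := allcheckT; rewrite /allcheck.
  move=> /allP /(_ _ (code_vn (f (inord 0)))) /allP /(_ _ (code_vn (f (inord 1))))
    /allP /(_ _ (code_vn (f (inord 2)))) /allP /(_ _ (code_vn (f (inord 3))))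
    /allP /(_ _ (code_vn (f (inord 4)))).
  done.
have nthS : forall i, i < 5 -> nthn s i = code (f (inord i)).
  by case=> [|[|[|[|[|i]]]]].
have prsP : forall pq, pq \in prs -> (pq.1 < pq.2) && (pq.2 < 5).
  by apply/allP.
have lt5 : forall pq, pq \in prs -> pq.1 < 5.
  by move=> pq /prsP /andP [H1 H2]; exact: ltn_trans H1 H2.
have HO : forall pq, pq \in prs ->
    odd_path e3 (f (inord pq.1)) (f (inord pq.2)) (P (inord pq.1) (inord pq.2)).
  move=> pq H; have /andP [H1 H2] := prsP pq H; apply: Hodd; rewrite !inordK //.
  exact: lt5.
pose F := fun pq : nat * nat => (f (inord pq.1), P (inord pq.1) (inord pq.2)).
have HD : forall pq pq', pq \in prs -> pq' \in prs -> pq != pq' ->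
    edge_disjoint (F pq).1 (F pq).2 (F pq').1 (F pq').2.
  move=> [i j] [i' j'] H H' Hne.
  have /andP [H1 H2] := prsP _ H; have /andP [H1' H2'] := prsP _ H'.
  have L := lt5 _ H; have L' := lt5 _ H'.
  apply: Hdisj; rewrite ?inordK //.
  apply: contra Hne => /eqP [E1 E2].
  move: (congr1 val E1) (congr1 val E2); rewrite /= !inordK // => -> ->; done.
have Hcnt : 2 * sumn [seq size (F pq).2 | pq <- prs] <= size U3.
  apply: count_edges => //.
  - move=> pq H; exact: odd_path_uniq (HO pq H).
  - move=> pq w H Hw; rewrite mem_filter; apply/andP; split.
      exact: dedges_rel e3_sym (odd_path_path (HO pq H)) Hw.
    case: w {Hw} => u v; apply: allpairs_f; exact: mem_vs3.
have Hlow : forall pq, pq \in prs ->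
    (if adjn (nthn s pq.1) (nthn s pq.2) then 1 else 3) <= size (F pq).2.
  move=> pq H; have HO' := HO pq H; have /andP [H1 H2] := prsP pq H.
  rewrite !nthS //; last exact: lt5.
  have Hodd' : odd (size (F pq).2) by case/andP: HO'.
  rewrite /F /= in Hodd' *.
  move: HO' Hodd'; case: (P (inord pq.1) (inord pq.2)) => [|v [|w [|w' q]]] //.
    rewrite /odd_path /is_path /= => /andP [/and3P [/andP [He _] _ /eqP Hl] _] _.
    by rewrite -e3_code -Hl He.
  by move=> _ _; case: ifP.
have Hsum : sumn [seq size (F pq).2 | pq <- prs] <= 18.
  by move: Hcnt; rewrite size_U3 -[36]/(2 * 18) leq_mul2l.
have Hlown : lown s <= 18.
  apply: leq_trans Hsum; exact: sumn_map_le.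
have Hu : uniq s.
  have -> : s = [seq c k | k <- iota 0 5] by [].
  rewrite map_inj_in_uniq ?iota_uniq // => k k' Hk Hk' E.
  move: Hk Hk'; rewrite !mem_iota /= => Hk Hk'.
  have := finj _ _ (code_inj E) => /(congr1 val); rewrite /= !inordK //.
move: Hchk; rewrite /checkn uniqnE Hu ltnNge Hlown /=.
case E0: (eqn (lown s) 18) => // Hx; move/eqnP: E0 => Hl.
have Heq := sumn_le_eq Hlow.
have Heq' : forall pq, pq \in prs -> size (F pq).2 = (if adjn (nthn s pq.1) (nthn s pq.2) then 1 else 3).
  by apply: Heq; rewrite -/(lown s) Hl.
have Shape : forall pq, pq \in nadj s -> exists x y,
    P (inord pq.1) (inord pq.2) = [:: x; y; f (inord pq.2)].
  move=> pq; rewrite mem_filter => /andP [Hna H].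
  have := Heq' pq H; rewrite (negbTE Hna) /F /=.
  have := odd_path_last (HO pq H).
  case: (P (inord pq.1) (inord pq.2)) => [|x [|y [|w [|? ?]]]] //= Hl' _.
  by exists x, y; rewrite Hl'.
pose ch := fun pq : nat * nat => match P (inord pq.1) (inord pq.2) with
  | [:: x; y; _] => (code x, code y) | _ => (0, 0) end.
move/negP: Hx; apply; apply: (@exch_complete _ _ _ ch).
- apply: filter_uniq; by [].
- move=> pq /Shape [x [y E]]; by rewrite /ch E /= !code_vn.
- move=> pq Hpq; have /Shape [x [y E]] := Hpq.
  move: Hpq; rewrite mem_filter => /andP [_ H].
  have /andP [H1 H2] := prsP pq H.
  have HO' := HO pq H; rewrite E in HO'.
  have Hnot : forall v, v \in [:: x; y] -> memn (code v) s = false.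
    move=> v Hv; rewrite memnE; apply/negP; rewrite !inE -!eqnE.
    move=> Hm; have [k [Hk Ek]] : exists k, k < 5 /\ v = f (inord k).
      move: Hm; rewrite !eqnE !(inj_eq code_inj).
      move=> /orP [/eqP ->|/orP [/eqP ->|/orP [/eqP ->|/orP [/eqP ->|/eqP ->]]]].
      + by exists 0. + by exists 1. + by exists 2. + by exists 3. + by exists 4.
    have := Hint (inord pq.1) (inord pq.2) (inord k); rewrite !inordK //; last exact: lt5.
    by rewrite E /interior /= -Ek Hv => /(_ H1).
  rewrite /ch E /= /admn (Hnot x) ?inE ?eqxx // (Hnot y) ?inE ?eqxx ?orbT //.
  move: HO'; rewrite /odd_path /is_path /= => /andP [/and3P [/and4P [Ha Hb Hc _] _ _] _].
  rewrite !nthS //; last exact: lt5.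
  by rewrite -!e3_code Ha Hb Hc.
- move=> pq pq' Hpq Hpq' Hne.
  have /Shape [x [y E]] := Hpq; have /Shape [x' [y' E']] := Hpq'.
  move: Hpq Hpq'; rewrite !mem_filter => /andP [_ H] /andP [_ H'].
  have := HD pq pq' H H' Hne; rewrite /F /= E E' /ch E E' /= /candn.
  rewrite !nthS ?(lt5 _ H) ?(lt5 _ H') //; try (by case/andP: (prsP _ H)); try (by case/andP: (prsP _ H')).
  rewrite -[[:: code x; code y; _]]/(map code [:: x; y; f (inord pq.2)]).
  rewrite -[[:: code x'; code y'; _]]/(map code [:: x'; y'; f (inord pq'.2)]).
  by rewrite !edn_map Dn_map.
- by [].
Qed.


Lemma restrict (V : finType) (e : rel V) t t' :
  toi_immersion e t -> t' <= t -> toi_immersion e t'.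
Proof.
move=> [f [P [Hinj Ho Hd Hi]]] H.
exists (fun i => f (widen_ord H i)), (fun i j => P (widen_ord H i) (widen_ord H j)); split.
{ by move=> i j /Hinj /(congr1 val) /= E; apply: val_inj. }
{ by move=> i j Hij; apply: Ho. }
{ by move=> i j i' j' H1 H2 Hne; apply: Hd. }
{ by move=> i j k Hij; apply: Hi. }
Qed.

Lemma ord0_elim (T : Type) : 'I_0 -> T.
Proof. by case=> m; rewrite ltn0. Qed.

Lemma toi_imm (V : finType) (e : rel V) t : toi e = t -> toi_immersion e t.
Proof.
move=> Ht; case: (asboolP (toi_immersion e t)) => // H; exfalso.
have : toi e <= t.-1.
  apply/bigmax_leqP => i /asboolP Hi; rewrite leqNgt; apply/negP => Hlt.
  apply: H; apply: (restrict Hi); move: Hlt; case: (t) => //.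
move: Ht; case: t H => [|t] H Ht; last by rewrite Ht ltnn.
exfalso; apply: H.
exists (@ord0_elim V), (fun _ _ => [::]); split; case=> //.
Qed.

Lemma toi_ge (V : finType) (e : rel V) t : toi_immersion e t -> t <= toi e.
Proof.
move=> H.
have Ht : t < #|V|.+1.
  case: H => f [_ [Hinj _ _ _]]; have := @leq_card _ _ f Hinj; rewrite card_ord ltnS //.
rewrite /toi; apply: (bigmax_sup (Ordinal Ht)) => //; exact/asboolP.
Qed.

Lemma K3_imm : toi_immersion (complete_rel 3) 3.
Proof.
exists id, (fun _ j => [:: j]); split => //.
- move=> i j Hij; rewrite /odd_path /is_path /= /complete_rel inE !andbT.
  have N : i != j by rewrite neq_ltn Hij.
  by rewrite N eqxx.
- move=> i j i' j' H H' Hne; rewrite /edge_disjoint /path_edges /= !andbT /same_edge /=.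
  rewrite negb_or; apply/andP; split; first by rewrite -xpair_eqE.
  apply/negP => /andP [/eqP E1 /eqP E2]; move: H H'; rewrite E1 E2 => H H'.
  by have := ltn_trans H H'; rewrite ltnn.
Qed.

Theorem mainTheorem6 :
  (forall (V : finType) (e : rel V) (W : finType) (f : rel W),
      simple_graph e -> simple_graph f ->
      connected_graph e -> connected_graph f ->
      toi e = 3 -> toi f = 3 ->
      4 <= toi (cart_rel e f))
  /\ toi (cart_rel (complete_rel 3) (complete_rel 3)) = 4.
Proof.
have P1 : forall (V : finType) (e : rel V) (W : finType) (f : rel W),
    simple_graph e -> simple_graph f -> toi_immersion e 3 -> toi_immersion f 3 ->
    4 <= toi (cart_rel e f).
  move=> V e W f [esym eirr] [fsym firr] He Hf.
  have [a [b [c [mab [mac [mbc HG]]]]]] := K3_extract He.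
  have [x [y [z [nxy [nxz [nyz HH]]]]]] := K3_extract Hf.
  have HP := prod_imm esym eirr fsym firr HG HH.
  exact: toi_ge HP.
split.
  move=> V e W f Se Sf _ _ He Hf; apply: P1 => //; exact: toi_imm.
apply/eqP; rewrite eqn_leq; apply/andP; split; last first.
  have S3 : simple_graph (complete_rel 3) := conj (@complete_sym 3) (@complete_irr 3).
  by apply: P1 => //; exact: K3_imm.
apply/bigmax_leqP => i /asboolP Hi; rewrite leqNgt; apply/negP => Hlt.
apply: noK5; exact: restrict Hi Hlt.
Qed.
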